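(* Let $\Delta>\delta\geq 1$ be integers, and let $G$ be a graph with $n$ vertices, $m$ edges, maximum degree at most $\Delta$, and minimum degree at least $\delta$. If $\frac{2m}{n}\in\left[\delta,\ \frac{2\Delta\delta}{\Delta+\delta}\right]$, then $$irr(G)\leq 2\Delta m-\delta\Delta n.$$
   Context: All graphs are finite, simple and undirected. For a graph $G$ with edge set $E(G)$ and vertex degrees $d_G(u)$, the irregularity (in the sense of Albertson) is $irr(G)=\sum_{uv\in E(G)}|d_G(u)-d_G(v)|$. *)

(* Defs.v *)
From mathcomp Require Import all_boot all_order all_algebra.
Set Implicit Arguments. Unset Strict Implicit. Unset Printing Implicit Defensive.

Definition simple_graph (T : finType) (e : rel T) : Prop :=
  symmetric e /\ irreflexive e.

Definition deg (T : finType) (e : rel T) (x : T) : nat := #|[set y | e x y]|.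

Definition edges (T : finType) (e : rel T) : {set {set T}} :=
  [set [set x; y] | x in T, y in T & e x y].

(* Albertson irregularity: sum over edges uv of |d(u) - d(v)|,
   written as max minus min of the degrees of the two endpoints (S is nonempty, so the
   neutral element #|T| of minn is irrelevant). *)
Definition irr (T : finType) (e : rel T) : nat :=
  \sum_(S in edges e) ((\max_(x in S) deg e x) - (\big[minn/#|T|]_(x in S) deg e x)).

(* Main.v *)
Require Import Defs.
From mathcomp Require Import all_boot all_order all_algebra.
Import Order.TTheory GRing.Theory Num.Theory.

Lemma set2_eqE (T : finType) (x y u v : T) : x != y -> u != v ->
  ([set x; y] == [set u; v]) = ((x == u) && (y == v)) || ((x == v) && (y == u)).
Proof.
move=> xy uv; apply/eqP/idP => [E|].
  have hx : x \in [set u; v] by rewrite -E !inE eqxx.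
  have hy : y \in [set u; v] by rewrite -E !inE eqxx orbT.
  move: hx hy; rewrite !inE.
  by case/orP=>/eqP ?; case/orP=>/eqP ?; subst; rewrite ?eqxx ?orbT //= in xy *.
by case/orP=> /andP[/eqP -> /eqP ->]; rewrite // setUC.
Qed.

Lemma edge_sum (T : finType) (e : rel T) (G : {set T} -> nat) :
  simple_graph e ->
  \sum_x \sum_(y | e x y) G [set x; y] = 2 * \sum_(S in edges e) G S.
Proof.
case=> esymm eirr.
rewrite (pair_big_dep xpredT (fun x y => e x y) (fun x y => G [set x; y])) /=.
rewrite (partition_big (fun p : T * T => [set p.1; p.2]) (mem (edges e))) /=; last first.
  by move=> [x y] /= exy; apply: imset2_f; rewrite ?inE.
rewrite big_distrr /=; apply: eq_bigr => S /imset2P[u v _]; rewrite inE /= => huv ->.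
have uv : u != v by apply: contraTneq huv => ->; rewrite eirr.
rewrite (eq_bigr (fun _ => G [set u; v])); last by move=> p /andP[_ /eqP ->].
rewrite sum_nat_const; congr (_ * _).
have <- : ((u, v) != (v, u)).+1 = 2 by rewrite -pair_eqE /= negb_and uv.
rewrite -cards2.
apply: eq_card => -[x y]; rewrite !inE -!pair_eqE /= unfold_in /=.
case exy : (e x y) => /=; last first.
  apply/esym/negbTE; apply/negP => /orP[/andP[/eqP ex /eqP ey]|/andP[/eqP ex /eqP ey]];
  by move: exy; rewrite ex ey ?huv // esymm huv.
have xy : x != y by apply: contraTneq exy => ->; rewrite eirr.
by rewrite set2_eqE.
Qed.

From mathcomp Require Import ring lra.
Local Open Scope ring_scope.

Lemma dart_ineq (a b D d : nat) : (1 <= d)%N -> (d <= a)%N -> (a <= D)%N ->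
  (d <= b)%N -> (b <= D)%N ->
  ((maxn a b - minn a b)%:R : rat) <=
  2 * D%:R - (d * D)%:R / a%:R - (d * D)%:R / b%:R.
Proof.
move=> d1 da aD db bD.
have a0 : (0 < a)%N by apply: leq_trans da.
have b0 : (0 < b)%N by apply: leq_trans db.
have A0 : (0 : rat) < a%:R by rewrite ltr0n.
have B0 : (0 : rat) < b%:R by rewrite ltr0n.
set A : rat := a%:R; set B : rat := b%:R.
have hD : (d * D)%:R = d%:R * D%:R :> rat by rewrite natrM.
suff H : (maxn a b - minn a b)%:R * (A * B) <= 2 * D%:R * A * B - d%:R * D%:R * B - d%:R * D%:R * A.
  have -> : 2 * D%:R - (d * D)%:R / A - (d * D)%:R / B =
     (2 * D%:R * A * B - d%:R * D%:R * B - d%:R * D%:R * A) / (A * B).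
    by rewrite hD; field; apply/andP; split; apply: lt0r_neq0.
  by rewrite ler_pdivlMr ?mulr_gt0.
have dA : d%:R <= A by rewrite ler_nat.
have dB : d%:R <= B by rewrite ler_nat.
have AD : A <= D%:R by rewrite ler_nat.
have BD : B <= D%:R by rewrite ler_nat.
case: (leqP a b) => ab.
  have AB : A <= B by rewrite ler_nat.
  rewrite natrB // -/A -/B.
  have e1 : 2 * D%:R * A * B - d%:R * D%:R * B - d%:R * D%:R * A - (B - A) * (A * B)
     = A * ((B - A) * (D%:R - B)) + D%:R * ((A + B) * (A - d%:R)) by ring.
  rewrite -subr_ge0 e1; apply: addr_ge0; apply: mulr_ge0; try lra;
  apply: mulr_ge0; lra.
have ab' := ltnW ab.
have BA : B <= A by rewrite ler_nat.
rewrite natrB // -/A -/B.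
have e1 : 2 * D%:R * A * B - d%:R * D%:R * B - d%:R * D%:R * A - (A - B) * (A * B)
   = B * ((A - B) * (D%:R - A)) + D%:R * ((A + B) * (B - d%:R)) by ring.
rewrite -subr_ge0 e1; apply: addr_ge0; apply: mulr_ge0; try lra;
apply: mulr_ge0; lra.
Qed.

Lemma deg_sum (T : finType) (e : rel T) (c : rat) (x : T) :
  \sum_(y | e x y) c = c * (deg e x)%:R.
Proof. by rewrite sumr_const /deg cardsE mulr_natr. Qed.

Theorem proposition2 (T : finType) (e : rel T) (Delta delta : nat) :
  simple_graph e ->
  (1 <= delta)%N -> (delta < Delta)%N ->
  (0 < #|T|)%N ->
  (forall x : T, deg e x <= Delta)%N ->
  (forall x : T, delta <= deg e x)%N ->
  (delta * #|T| <= 2 * #|edges e|)%N ->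
  (2 * #|edges e| * (Delta + delta) <= 2 * Delta * delta * #|T|)%N ->
  ((irr e)%:Z <= (2 * Delta * #|edges e|)%:Z - (delta * Delta * #|T|)%:Z)%R.
Proof.
move=> G d1 _ _ hD hd _ _.
have [esymm eirr] := G.
rewrite lerBrDr -PoszD lez_nat.
set m := #|edges e|; set n := #|T|.
pose h x y := (maxn (deg e x) (deg e y) - minn (deg e x) (deg e y))%N.
have F1 : (\sum_x deg e x = 2 * m)%N.
  rewrite /m -sum1_card -(@edge_sum T e (fun _ => 1%N) G).
  by apply: eq_bigr => x _; rewrite sum1_card /deg cardsE.
have F2 : (2 * irr e <= \sum_x \sum_(y | e x y) h x y)%N.
  rewrite /irr -edge_sum //; apply: leq_sum => x _; apply: leq_sum => y exy.
  have xy : x != y by apply: contraTneq exy => ->; rewrite eirr.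
  rewrite /h big_setU1 /= ?inE // big_set1.
  apply: leq_sub2l.
  have dT z : (deg e z <= #|T|)%N by rewrite /deg max_card.
  apply: (big_ind (fun k => minn (deg e x) (deg e y) <= k)%N).
  - by rewrite geq_min dT.
  - by move=> p q hp hq; rewrite leq_min hp hq.
  - by move=> z; rewrite !inE => /orP[] /eqP ->; rewrite ?geq_minl ?geq_minr.
have dpos z : (0 < deg e z)%N by apply: leq_trans (hd z).
pose c : rat := (delta * Delta)%:R.
have key : ((2 * irr e)%N%:R : rat) <= \sum_x \sum_(y | e x y)
   (2 * Delta%:R - c / (deg e x)%:R - c / (deg e y)%:R).
  apply: (le_trans (_ : _ <= (\sum_x \sum_(y | e x y) h x y)%:R)).
    by rewrite ler_nat.
  rewrite natr_sum; apply: ler_sum => x _; rewrite natr_sum; apply: ler_sum => y _.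
  by apply: dart_ineq.
have S1 : \sum_x \sum_(y | e x y) (c / (deg e x)%:R) = c * n%:R.
  rewrite (eq_bigr (fun _ => c)); first by rewrite sumr_const mulr_natr.
  move=> x _; rewrite deg_sum divfK // pnatr_eq0 -lt0n; exact: dpos.
have S2 : \sum_x \sum_(y | e x y) (c / (deg e y)%:R) = c * n%:R.
  rewrite (exchange_big_dep xpredT) //= -S1; apply: eq_bigr => y _.
  by apply: eq_bigl => x; rewrite esymm.
have S0 : \sum_x \sum_(y | e x y) (2 * Delta%:R : rat) = 2 * Delta%:R * (2 * m)%:R.
  rewrite -F1 natr_sum big_distrr /=; apply: eq_bigr => x _.
  by rewrite deg_sum.
have E : \sum_x \sum_(y | e x y)
   (2 * Delta%:R - c / (deg e x)%:R - c / (deg e y)%:R) =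
   2 * Delta%:R * (2 * m)%:R - c * n%:R - c * n%:R.
  rewrite -S0 -[X in (_ - X) - _]S1 -S2 -!sumrB; apply: eq_bigr => x _; by rewrite -!sumrB.
rewrite E in key.
rewrite -(ler_nat rat) natrD !natrM -/c.
rewrite natrM in key.
have : c * n%:R = (delta * Delta * n)%:R by rewrite natrM.
move: key; rewrite !natrM; lra.
Qed.
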